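(* For every integer $d\ge 1$ there exists a faithful $1$-weak combinatorial description of $\mathcal{W}_d$ compatible with $\mathrm{MI}_{\mathfrak{S}}$. Concretely: there exist sets $\mathrm{CD}_d(n)$ ($n\ge1$, with trivial $\mathfrak{S}_n$-action), maps $H^n_d:\mathrm{CD}_d(n)\to\mathcal{W}^n_d$ such that $H^n_d(\mathrm{CD}_d(n))$ is a basis of $\mathcal{W}^n_d$, and surjections $q_n:\mathrm{CD}_d(n)\to\mathrm{MI}(n)/\mathfrak{S}_n$ such that $\pi_d(H^n_d(a))=G^n(q_n(a))$ for all $a\in\mathrm{CD}_d(n)$.
   Context: Rooted trees: a rooted tree on $[n]$ is a set $E$ of ordered pairs (an edge $(v,w)$ means $w$ is a child of $v$) such that exactly one vertex (the root) has no parent, every other vertex has exactly one parent, and all vertices are connected to the root by following parents; $\mathrm{RT}(n)$ is the set of these. $\mathcal{C}_d=C^\infty(\mathbb{R}^d,\mathbb{R}^d)$. For $\tau$ with root $r$ whose children are $v_1,\dots,v_k$, recursively $F(\tau)((f^i)_{i})=\sum_{j_1,\dots,j_k=1}^d F(\tau_{v_1})(\cdots)_{j_1}\cdots F(\tau_{v_k})(\cdots)_{j_k}\,\partial_{j_1}\cdots\partial_{j_k}f^r$, with $\tau_{v_m}$ the subtree of $v_m$ and its descendants evaluated on the $f^i$ indexed by its vertices, $(\cdot)_j$ the $j$-th coordinate, $\partial_j=\partial/\partial x_j$ (single vertex: $F(\tau)=f^r$). With a single label ($\ell=1$), the labelled objects of arity $n$ of a sequence $C$ of $\mathfrak{S}_n$-sets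 are $C(n)/\mathfrak{S}_n$, and identification maps are trivial. $\mathcal{W}^n_d$ is the real span of the maps $\mathcal{C}_d\to\mathcal{C}_d$, $f\mapsto F(\tau)(f,\dots,f)$, $\tau\in\mathrm{RT}(n)$. $\mathrm{MI}(n)$ is the set of maps $\varphi:[n]\to\mathbb{N}$ with $\sum_v\varphi(v)=n-1$, $\mathfrak{S}_n$ permuting $[n]$; $\mathrm{MI}_{\mathfrak{S}}(n)=\mathrm{MI}(n)/\mathfrak{S}_n$. For $[\varphi]\in\mathrm{MI}_{\mathfrak{S}}(n)$ and $g\in C^\infty(\mathbb{R},\mathbb{R})$, $G^n([\varphi])(g)=g^{(\varphi(1))}\cdots g^{(\varphi(n))}$. The projection $\pi_d$ sends $\Phi:\mathcal{C}_d\to\mathcal{C}_d$ to $g\mapsto\big(t\mapsto$ first coordinate of $\Phi(\hat g)(t,0,\dots,0)\big)$, where $\hat g(x)=(g(x_1),0,\dots,0)$. A faithful $1$-weak combinatorial description of $\mathcal{W}_d$ is a sequence of $\mathfrak{S}_n$-sets $\mathrm{CD}_d(n)$ with maps $H^n_d:\mathrm{CD}_d(n)/\mathfrak{S}_n\to\mathcal{W}^n_d$ whose image is a basis of $\mathcal{W}^n_d$ for each $n$; compatibility with $\mathrm{MI}_{\mathfrak{S}}$ means surjections $q_n$ onto $\mathrm{MI}_{\mathfrak{S}}(n)$ with $\pi_d\circ H^n_d=G^n\circ q_n$. *)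

(* Defs.v *)
From HB Require Import structures.
From mathcomp Require Import all_boot all_order all_algebra.
From mathcomp Require Import all_classical all_reals all_analysis.
Set Implicit Arguments. Unset Strict Implicit. Unset Printing Implicit Defensive.
Import Order.TTheory GRing.Theory Num.Theory.
Local Open Scope ring_scope.

Section Defs.
Variable R : realType.

Definition vec (d : nat) := 'I_d -> R.

Definition upd (d : nat) (x : vec d) (j : 'I_d) (t : R) : vec d :=
  fun i => if i == j then x i + t else x i.

Definition partial (d : nat) (j : 'I_d) (g : vec d -> R) : vec d -> R :=
  fun x => derive1 (fun t => g (upd x j t)) 0.

Definition partials (d : nat) (js : seq 'I_d) (g : vec d -> R) : vec d -> R :=
  foldr (@partial d) g js.

Definition cont_at (d : nat) (g : vec d -> R) (x : vec d) : Prop :=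
  forall e : R, 0 < e -> exists2 del : R, 0 < del &
    forall y : vec d, (forall i, `|y i - x i| < del) -> `|g y - g x| < e.

Definition smooth_scalar (d : nat) (g : vec d -> R) : Prop :=
  forall (js : seq 'I_d) (x : vec d),
    cont_at (partials js g) x /\
    forall j : 'I_d, derivable (fun t => partials js g (upd x j t)) 0 1.

Definition smooth (d : nat) (f : vec d -> vec d) : Prop :=
  forall k : 'I_d, smooth_scalar (fun x => f x k).

Record Cd (d : nat) := MkCd { cd_fun :> vec d -> vec d; cd_smooth : smooth cd_fun }.

Definition smooth1 (g : R -> R) : Prop :=
  forall (m : nat) (t : R), derivable (derive1n m g) t 1.

(** Rooted trees on [n] as edge sets E; (v,w) \in E means w is a child of v. *)
Definition is_root (n : nat) (E : {set 'I_n * 'I_n}) (r : 'I_n) : bool :=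
  [forall v, (v, r) \notin E].

Definition is_rooted_tree (n : nat) (E : {set 'I_n * 'I_n}) : bool :=
  [exists r, [&& is_root E r,
    [forall r', is_root E r' ==> (r' == r)],
    [forall w, (w != r) ==> (#|[set v | (v, w) \in E]| == 1)] &
    [forall w, connect (fun a b => (b, a) \in E) w r]]].

Definition children (n : nat) (E : {set 'I_n * 'I_n}) (v : 'I_n) : seq 'I_n :=
  enum [set w | (v, w) \in E].

(** sum_{j_1..j_k} G(c_1)_{j_1} ... G(c_k)_{j_k} d_{j_k} ... d_{j_1} h *)
Fixpoint sumprod (d n : nat) (cs : seq 'I_n) (G : 'I_n -> vec d -> vec d)
    (h : vec d -> R) : vec d -> R :=
  match cs with
  | [::] => h
  | c :: cs' => fun x => \sum_(j < d) G c x j * sumprod cs' G (partial j h) x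
  end.

(** F of the subtree rooted at v, computed with fuel m (m >= height suffices) *)
Fixpoint Fsub (d n : nat) (E : {set 'I_n * 'I_n}) (fs : 'I_n -> vec d -> vec d)
    (m : nat) (v : 'I_n) : vec d -> vec d :=
  match m with
  | 0 => fs v
  | m'.+1 => fun x k => sumprod (children E v) (Fsub E fs m') (fun y => fs v y k) x
  end.

Definition Ftree (d n : nat) (E : {set 'I_n * 'I_n}) (fs : 'I_n -> vec d -> vec d)
    : vec d -> vec d :=
  match [pick r | is_root E r] with
  | Some r => Fsub E fs n r
  | None => fun _ _ => 0
  end.

(** maps C_d -> C_d (codomain viewed inside functions R^d -> R^d) *)
Definition Op (d : nat) := Cd d -> vec d -> vec d.

Definition PhiTree (d n : nat) (E : {set 'I_n * 'I_n}) : Op d :=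
  fun f => Ftree E (fun _ => cd_fun f).

Definition inW (d n : nat) (Phi : Op d) : Prop :=
  exists c : {set 'I_n * 'I_n} -> R,
    forall f x k, Phi f x k = \sum_(E | is_rooted_tree E) c E * PhiTree E f x k.

Definition image_is_basis (d n : nat) (A : Type) (H : A -> Op d) : Prop :=
  (forall a, inW n (H a)) /\
  (forall Phi, inW n Phi -> exists m (a : 'I_m -> A) (c : 'I_m -> R),
      forall f x k, Phi f x k = \sum_(i < m) c i * H (a i) f x k) /\
  (forall m (a : 'I_m -> A) (c : 'I_m -> R),
      (forall i j, H (a i) = H (a j) -> i = j) ->
      (forall f x k, \sum_(i < m) c i * H (a i) f x k = 0) ->
      forall i, c i = 0).

Definition inMI (n : nat) (phi : 'I_n -> nat) : Prop :=
  (\sum_(i < n) phi i)%N = n.-1.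

Definition perm_equiv (n : nat) (phi psi : 'I_n -> nat) : Prop :=
  exists sigma : 'I_n -> 'I_n, bijective sigma /\ forall i, psi i = phi (sigma i).

(** g_hat(x) = (g(x_1), 0, ..., 0); i0 is the first coordinate *)
Definition ghat (d : nat) (i0 : 'I_d) (g : R -> R) : vec d -> vec d :=
  fun x k => if k == i0 then g (x i0) else 0.

Definition on_axis (d : nat) (i0 : 'I_d) (t : R) : vec d :=
  fun k => if k == i0 then t else 0.

(** pi_d(Phi)(g)(t) = G^n([phi])(g)(t), as maps on C^infty(R,R) *)
Definition pi_eq_G (d n : nat) (i0 : 'I_d) (Phi : Op d) (phi : 'I_n -> nat) : Prop :=
  forall g : R -> R, smooth1 g ->
  forall F : Cd d, (forall x, cd_fun F x = ghat i0 g x) ->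
  forall t : R, Phi F (on_axis i0 t) i0 = \prod_(v < n) derive1n (phi v) g t.

End Defs.

(* Main.v *)
Require Import Defs.
From HB Require Import structures.
From mathcomp Require Import all_boot all_order all_algebra.
From mathcomp Require Import all_classical all_reals all_analysis.
From mathcomp Require Import fingroup perm.
From Stdlib Require Import Classical.
Set Implicit Arguments. Unset Strict Implicit. Unset Printing Implicit Defensive.
Import Order.TTheory GRing.Theory Num.Theory.

Section Part1.
Local Open Scope ring_scope.

Section A.
Variable R : realType.
Variable d : nat.
Variable i0 : 'I_d.

Lemma derive1_shift (f : R -> R) a : derive1 (fun t => f (a + t)) 0 = derive1 f a.
Proof.
rewrite /derive1 /=.
under eq_fun do rewrite addr0 addr0 (addrC a).
by [].
Qed.
Lemma partial_axis (H : R -> R) (j : 'I_d) :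
  partial j (fun y : vec R d => H (y i0)) =
  fun y => if j == i0 then derive1 H (y i0) else 0.
Proof.
apply/funext => y; rewrite /partial /upd.
have [e|ne] := boolP (i0 == j).
  by move/eqP: e => e; subst j; rewrite eqxx derive1_shift.
rewrite eq_sym (negbTE ne).
exact: derive1_cst.
Qed.

Lemma derive1n_zero m : derive1n m (fun _ : R => (0 : R)) = (fun _ => 0).
Proof.
elim: m => [//|m IH]; rewrite derive1nS IH.
by apply/funext => t; exact: derive1_cst.
Qed.

Lemma sumprod_axis n (cs : seq 'I_n) (G : 'I_n -> vec R d -> vec R d)
   (u : 'I_n -> R -> R) (H : R -> R) x :
  (forall c y j, G c y j = if j == i0 then u c (y i0) else 0) ->
  sumprod cs G (fun y => H (y i0)) x =
  (\prod_(c <- cs) u c (x i0)) * derive1n (size cs) H (x i0).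
Proof.
move=> hG; elim: cs H => [|c cs IH] H /=; first by rewrite big_nil mul1r.
rewrite (bigD1 i0) //= big1 ?addr0; last first.
  by move=> j /negbTE nj; rewrite hG nj mul0r.
rewrite hG eqxx partial_axis eqxx.
by rewrite IH big_cons -derive1nS derive1Sn mulrA.
Qed.

Fixpoint U n (E : {set 'I_n * 'I_n}) (g : R -> R) (m : nat) (v : 'I_n) : R -> R :=
  match m with
  | 0 => g
  | m'.+1 => fun s => (\prod_(c <- children E v) U E g m' c s) *
                      derive1n (size (children E v)) g s
  end.

Lemma Fsub_axis n (E : {set 'I_n * 'I_n}) g m v x k :
  Fsub E (fun _ => ghat i0 g) m v x k = if k == i0 then U E g m v (x i0) else 0.
Proof.
elim: m v x k => [|m IH] v x k /=; first by [].
have -> : (fun y => ghat i0 g y k) =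
          (fun y : vec R d => (if k == i0 then g else (fun _ => 0)) (y i0)).
  by apply/funext => y; rewrite /ghat; case: (k == i0).
rewrite (@sumprod_axis _ _ _ (U E g m)) //.
by case: (k == i0) => //; rewrite derive1n_zero mulr0.
Qed.

End A.

End Part1.

Section Part2.

Lemma connect_last (T : finType) (e : rel T) x y :
  connect e x y -> x != y -> exists z, connect e x z /\ e z y.
Proof.
move/connectP => [p]; elim/last_ind: p => [|p z _] /=; first by move=> _ ->; rewrite eqxx.
rewrite rcons_path last_rcons => /andP[pth ez] -> _.
exists (last x p); split => //; apply/connectP; by exists p.
Qed.

Lemma connect_first (T : finType) (e : rel T) x y :
  connect e x y -> x != y -> exists z, e x z /\ connect e z y.
Proof.
move/connectP => [[|z p]] /=; first by move=> _ ->; rewrite eqxx.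
move=> /andP[exz pth] -> _; exists z; split => //; apply/connectP; by exists p.
Qed.

Lemma connect_closed_fwd (T : finType) (e : rel T) (S : pred T) x y :
  (forall a b, S a -> e a b -> S b) -> connect e x y -> S x -> S y.
Proof.
move=> hS /connectP [p]; elim: p x => [|z p IH] x /=; first by move=> _ ->.
by move=> /andP[exz pth] ey Sx; apply: (IH z pth ey); exact: hS Sx exz.
Qed.

Section Tree.
Variable n : nat.
Variable E : {set 'I_n * 'I_n}.
Variable r : 'I_n.
Hypothesis hr : is_root E r.
Hypothesis hpar : forall w, w != r -> #|[set v | (v, w) \in E]| = 1%N.
Hypothesis hconn : forall w, connect (fun a b => (b, a) \in E) w r.

Definition chr : rel 'I_n := fun a b => (a, b) \in E.

Lemma root_noparent v : (v, r) \notin E.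
Proof. by move/forallP: hr. Qed.

Lemma par_uniq u u' w : (u, w) \in E -> (u', w) \in E -> u = u'.
Proof.
move=> h h'.
have wr : w != r by apply/eqP => e; subst w; move: h; rewrite (negbTE (root_noparent u)).
have [x hx] := cards1P (introT eqP (hpar wr)).
have : u \in [set v | (v, w) \in E] by rewrite inE.
have : u' \in [set v | (v, w) \in E] by rewrite inE.
by rewrite hx !inE => /eqP -> /eqP ->.
Qed.

Lemma acyc v c : (v, c) \in E -> ~~ connect chr c v.
Proof.
move=> hvc; apply/negP => hcv.
pose S := [pred w | connect chr c w && connect chr w v].
have hS : forall w, S w -> exists2 u, S u & (u, w) \in E.
  move=> w /andP[cw wv].
  have [ewc|nwc] := eqVneq c w.
    subst w; exists v => //; apply/andP; split => //.
  have [u [cu uw]] := connect_last cw nwc.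
  exists u => //; apply/andP; split => //.
  by apply: connect_trans wv; apply: connect1.
have Sv : S v by apply/andP; split.
have Sr : S r.
  apply: (connect_closed_fwd (e := fun a b => (b, a) \in E) _ (hconn v) Sv).
  move=> a b Sa hba; have [u Su hua] := hS a Sa.
  by rewrite (par_uniq hba hua).
have [u _ hur] := hS r Sr.
by move: hur; rewrite (negbTE (root_noparent u)).
Qed.

Lemma compar a b w : connect chr a w -> connect chr b w ->
  connect chr a b || connect chr b a.
Proof.
move/connectP => [p]; elim/last_ind: p w b => [|p z IH] w b /=.
  by move=> _ -> hb; rewrite hb orbT.
rewrite rcons_path last_rcons => /andP[pth ez] -> hb.
have [ebz|nbz] := eqVneq b z.
  subst b; apply/orP; left; apply: connect_trans (connect1 ez).
  by apply/connectP; exists p.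
have [u [bu uz]] := connect_last hb nbz.
have eu := par_uniq ez uz; subst u.
exact: (IH (last a p) b pth erefl bu).
Qed.

Lemma disj v c1 c2 w : (v, c1) \in E -> (v, c2) \in E -> c1 != c2 ->
  connect chr c1 w -> connect chr c2 w -> False.
Proof.
move=> h1 h2 n12 hw1 hw2.
wlog: c1 c2 h1 h2 n12 hw1 hw2 / connect chr c1 c2.
  move=> hwlog; case/orP: (compar hw1 hw2) => h.
    exact: (hwlog c1 c2).
  by apply: (hwlog c2 c1) => //; rewrite eq_sym.
move=> h12; have [u [c1u uc2]] := connect_last h12 n12.
have eu := par_uniq uc2 h2; subst u.
by move: (acyc h1); rewrite c1u.
Qed.

Lemma root_conn w : connect chr r w.
Proof.
have h := connect_rev chr w r. simpl in h. rewrite -h. exact: hconn.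
Qed.

Definition D v := [set w | connect chr v w].

Lemma D_count v w :
  (w \in D v : nat) = ((w == v) + \sum_(c <- children E v) (w \in D c : nat))%N.
Proof.
rewrite /children big_enum /=.
have [ewv|nwv] := eqVneq w v.
  subst w; rewrite !inE connect0 big1 //= => c; rewrite inE => hc.
  by rewrite inE (negbTE (acyc hc)).
rewrite add0n inE.
case: (boolP (connect chr v w)) => hvw /=.
  have [c0 [hc0 hc0w]] := connect_first hvw ltac:(by rewrite eq_sym).
  rewrite (bigD1 c0); last by rewrite inE.
  rewrite [in X in _ = (X + _)%N]inE hc0w big1 // => c /andP[]; rewrite inE => hc nc.
  rewrite inE; case: (boolP (connect chr c w)) => // hcw.
  by exfalso; apply: (disj hc hc0 nc hcw hc0w).
rewrite big1 // => c; rewrite !inE => hc; apply/eqP; rewrite eqb0; apply/negP => hcw.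
by move/negP: hvw; apply; apply: connect_trans hcw; apply: connect1.
Qed.

Lemma D_lt v c : (v, c) \in E -> (#|D c| < #|D v|)%N.
Proof.
move=> hvc; apply: proper_card; apply/properP; split.
  apply/fintype.subsetP => w; rewrite !inE => hcw; apply: connect_trans hcw.
  exact: connect1.
by exists v; rewrite !inE ?connect0 // (negbTE (acyc hvc)).
Qed.

End Tree.

End Part2.

Section Part3.
Local Open Scope ring_scope.

Section B.
Variable R : realType.
Variable n : nat.
Variable E : {set 'I_n * 'I_n}.
Variable r : 'I_n.
Hypothesis hr : is_root E r.
Hypothesis hpar : forall w, w != r -> #|[set v | (v, w) \in E]| = 1%N.
Hypothesis hconn : forall w, connect (fun a b => (b, a) \in E) w r.

Lemma U_prod (g : R -> R) m v s : (#|D E v| <= m)%N ->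
  U E g m v s = \prod_(w < n) (derive1n (size (children E w)) g s) ^+ (w \in D E v).
Proof.
elim: m v => [|m IH] v hm.
  by exfalso; move: hm; rewrite leqn0 => /eqP/cards0_eq/setP/(_ v); rewrite !inE connect0.
rewrite /=.
set P := fun w : 'I_n => derive1n (size (children E w)) g s.
have e : forall w : 'I_n, P w ^+ (w \in D E v) =
    P w ^+ (w == v) * \prod_(c <- children E v) P w ^+ (w \in D E c).
  move=> w; rewrite -expr_sum -exprD.
  by rewrite -(D_count hr hpar hconn).
rewrite [RHS](eq_bigr _ (fun w _ => e w)).
rewrite big_split /= mulrC; congr (_ * _).
  rewrite (bigD1 v) //= eqxx expr1 big1 ?mulr1 // => w nwv.
  by rewrite (negbTE nwv) expr0.
rewrite exchange_big /=.
rewrite big_seq_cond [in RHS]big_seq_cond; apply: eq_bigr => c /andP[hc _].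
apply: IH.
have hvc : (v, c) \in E by move: hc; rewrite /children mem_enum inE.
by rewrite -ltnS; apply: leq_trans hm; exact: (D_lt hr hpar hconn hvc).
Qed.

End B.

Lemma tree_parts n (E : {set 'I_n * 'I_n}) : is_rooted_tree E ->
  exists r, [/\ is_root E r, forall r', is_root E r' -> r' = r,
    forall w, w != r -> #|[set v | (v, w) \in E]| = 1%N &
    forall w, connect (fun a b => (b, a) \in E) w r].
Proof.
move/existsP => [r /and4P[h1 /forallP h2 /forallP h3 /forallP h4]].
exists r; split => //.
- by move=> r' hr'; apply/eqP; exact: (implyP (h2 r') hr').
- by move=> w hw; apply/eqP; exact: (implyP (h3 w) hw).
Qed.

Lemma PhiTree_axis (R : realType) d (i0 : 'I_d) n (E : {set 'I_n * 'I_n})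
  (tree : is_rooted_tree E) (g : R -> R) (F : Cd R d)
  (hF : forall x, cd_fun F x = ghat i0 g x) (t : R) :
  PhiTree E F (on_axis i0 t) i0 = \prod_(v < n) derive1n (size (children E v)) g t.
Proof.
have [r [hr hu hpar hconn]] := tree_parts tree.
rewrite /PhiTree /Ftree.
have -> : cd_fun F = ghat i0 g by apply/funext => x; exact: hF.
case: pickP => [r' hr'|none]; last by move: (none r); rewrite hr.
rewrite (hu r' hr') Fsub_axis eqxx.
have -> : on_axis i0 t i0 = t by rewrite /on_axis eqxx.
rewrite (U_prod hr hpar hconn); last by rewrite -[n in (_ <= n)%N]card_ord max_card.
apply: eq_bigr => w _.
by rewrite inE (root_conn hconn) expr1.
Qed.

End Part3.

Section Part4.

Lemma card_as_sum (T : finType) (P : pred T) :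
  #|[set x | P x]| = (\sum_(x : T) (P x : nat))%N.
Proof.
rewrite -sum1_card big_mkcond /=; apply: eq_bigr => x _; rewrite inE.
by case: (P x).
Qed.

Lemma tree_MI n (E : {set 'I_n * 'I_n}) : is_rooted_tree E ->
  (\sum_(v < n) size (children E v))%N = n.-1.
Proof.
move=> tree; have [r [hr hu hpar hconn]] := tree_parts tree.
under eq_bigr do rewrite /children -cardE card_as_sum.
rewrite exchange_big /=.
under eq_bigr => w _ do rewrite -(card_as_sum (fun v => (v, w) \in E)).
rewrite (bigD1 r) //=.
have -> : #|[set x | (x, r) \in E]| = 0%N.
  by apply/eqP; rewrite cards_eq0; apply/eqP/setP => x; rewrite !inE (negbTE (root_noparent hr x)).
rewrite add0n (eq_bigr (fun _ => 1%N)); last by move=> w hw; exact: hpar.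
by rewrite sum1_card cardC1 card_ord.
Qed.

End Part4.

Section Part5.

Section Construct.
Variable n' : nat.
Local Notation n := n'.+1.
Variable dl : nat -> nat.
Hypothesis hmono : forall i j, i <= j -> j < n -> dl j <= dl i.
Hypothesis hsum : \sum_(0 <= l < n) dl l = n'.

Definition Spre k := \sum_(0 <= l < k) dl l.

Lemma S_mono i j : i <= j -> Spre i <= Spre j.
Proof. by move=> hij; rewrite /Spre (big_cat_nat (leq0n i) hij) /= leq_addr. Qed.

Lemma S_succ k : Spre k.+1 = Spre k + dl k.
Proof. by rewrite /Spre big_nat_recr. Qed.

Lemma Sn : Spre n = n'.
Proof. exact: hsum. Qed.

Lemma prefix w : 0 < w -> w <= n' -> w <= Spre w.
Proof.
move=> w0 wn.
case: (posnP (dl w.-1)) => hd.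
  have hz : forall l, w.-1 <= l < n -> dl l = 0.
    move=> l /andP[h1 h2]; apply/eqP; rewrite -leqn0 -hd; exact: hmono.
  have : Spre n = Spre w + \sum_(w <= l < n) dl l.
    by rewrite /Spre (big_cat_nat (leq0n w)) //; apply: leq_trans wn _.
  rewrite big1_seq ?addn0 => [|l /andP[_]]; last first.
    rewrite mem_iota subnKC; last by apply: leq_trans wn _.
    move=> /andP[h1 h2]; apply: hz; rewrite h2 andbT.
    by apply: leq_trans h1; exact: leq_pred.
  by rewrite Sn => <-.
rewrite /Spre big_mkord.
have e : \sum_(l < w) 1 = w by rewrite sum1_card card_ord.
rewrite -[X in X <= _]e.
apply: leq_sum => l _; apply: leq_trans hd _; apply: hmono.
  by rewrite -ltnS prednK.
by apply: leq_ltn_trans (leq_pred w) _; rewrite ltnS.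
Qed.

Definition par w := find (fun i => w <= Spre i.+1) (iota 0 n).

Lemma par_spec w : 0 < w -> w <= n' ->
  [/\ Spre (par w) < w, w <= Spre (par w).+1 & par w < w].
Proof.
move=> w0 wn.
have hh : has (fun i => w <= Spre i.+1) (iota 0 n).
  apply/seq.hasP; exists n'; first by rewrite mem_iota /= add0n.
  by rewrite Sn.
have plt : par w < n by move: hh; rewrite has_find size_iota.
have h2 : w <= Spre (par w).+1.
  by have := nth_find 0 hh; rewrite nth_iota.
split => //.
- move: plt; rewrite /par; case e: (find _ _) => [|k] plt; first by rewrite /Spre big_geq.
  have hk : k < find (fun i => w <= Spre i.+1) (iota 0 n) by rewrite e.
  have := before_find 0 hk; rewrite nth_iota ?add0n; last first.
    by apply: ltn_trans plt.
  by move/negbT; rewrite -ltnNge.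
- rewrite ltnNge; apply/negP => hwp.
  have hlt : w.-1 < par w by rewrite prednK // (leq_trans _ hwp).
  have := before_find 0 hlt; rewrite nth_iota ?add0n; last first.
    by apply: leq_ltn_trans (leq_pred _) _; apply: leq_trans wn _.
  by rewrite prednK // prefix.
Qed.

Lemma par_eq w i : 0 < w -> w <= n' -> i < n ->
  (par w == i) = (Spre i < w <= Spre i.+1).
Proof.
move=> w0 wn iln; have [h1 h2 h3] := par_spec w0 wn.
apply/eqP/andP => [<-|[a b]]; first by [].
have [plt|pgt|//] := ltngtP (par w) i.
  by move: (leq_trans h2 (S_mono plt)); rewrite leqNgt a.
have := before_find 0 pgt; rewrite nth_iota // add0n b //.
Qed.

End Construct.

Lemma card_interval n a b : a <= b -> b < n ->
  #|[set w : 'I_n | a < w <= b]| = b - a.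
Proof.
move=> ab bn; rewrite card_as_sum.
rewrite -(big_mkord xpredT (fun w => (a < w <= b : nat))).
rewrite (big_cat_nat (leq0n a.+1)) //=; last by apply: leq_trans bn; rewrite ltnS.
rewrite (big_cat_nat (ab : a.+1 <= b.+1)) //=.
rewrite (eq_big_nat _ _ (F2 := fun _ => 0)); last by move=> i /andP[_ h]; rewrite ltnNge -ltnS h.
rewrite [X in _ + (_ + X)](eq_big_nat _ _ (F2 := fun _ => 0)); last first.
  by move=> i /andP[h _]; rewrite (leqNgt i b) h andbF.
rewrite [X in _ + (X + _)](eq_big_nat _ _ (F2 := fun _ => 1)); last first.
  by move=> i /andP[h1 h2]; rewrite h1 -ltnS h2.
by rewrite !sum_nat_const_nat !muln0 muln1 add0n addn0 subSS.
Qed.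

Lemma parent_tree n' (p : 'I_n'.+1 -> 'I_n'.+1) :
  (forall w : 'I_n'.+1, w != ord0 -> p w < w) ->
  is_rooted_tree [set e | (e.1 == p e.2) && (e.2 != ord0)].
Proof.
move=> hp; apply/existsP; exists ord0; apply/and4P; split.
- by apply/forallP => v; rewrite inE /= andbF.
- apply/forallP => r'; apply/implyP => /forallP hr'; apply/negPn/negP => nr.
  by move: (hr' (p r')); rewrite inE /= eqxx nr.
- apply/forallP => w; apply/implyP => hw; apply/eqP.
  rewrite (_ : [set v | _] = [set p w]) ?cards1 //.
  by apply/setP => v; rewrite !inE /= hw andbT.
- apply/forallP => w.
  have : forall k (w : 'I_n'.+1), w <= k ->
      connect (fun a b => (b, a) \in [set e | (e.1 == p e.2) && (e.2 != ord0)]) w ord0.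
    elim => [|k IH] w0 hk.
      by have -> : w0 = ord0 by apply/val_inj => /=; move: hk; rewrite leqn0 => /eqP.
    have [->|nw] := eqVneq w0 ord0; first exact: connect0.
    apply: connect_trans (connect1 _) (IH (p w0) _); first by rewrite inE /= eqxx nw.
    by rewrite -ltnS; apply: leq_trans (hp _ nw) hk.
  by move=> h; apply: h (leqnn w).
Qed.

End Part5.

Section Part6.

Lemma exists_tree n (phi : 'I_n -> nat) : 0 < n -> inMI phi ->
  exists E : {set 'I_n * 'I_n},
    is_rooted_tree E /\ perm_equiv phi (fun v => size (children E v)).
Proof.
case: n phi => [//|n'] phi _ hphi.
set t := [tuple phi i | i < n'.+1].
set s := sort geq t.
have ps : perm_eq s t by rewrite /s perm_sort.
have [sg hsg] := perm.tuple_permP ps.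
set dl := fun l => nth 0 s l.
have hdl : forall i : 'I_n'.+1, dl i = phi (sg i).
  move=> i; rewrite /dl hsg -tnth_nth tnth_mktuple /t tnth_mktuple //.
have ssize : size s = n'.+1 by rewrite size_sort size_tuple.
have hsorted : sorted geq s by apply: sort_sorted => a b; exact: leq_total.
have hmono : forall i j, i <= j -> j < n'.+1 -> dl j <= dl i.
  move=> i j ij jn.
  have gtr : transitive geq by move=> y x z h1 h2; exact: leq_trans h2 h1.
  have grf : reflexive geq by move=> x; exact: leqnn.
  apply: (sorted_leq_nth gtr grf 0 hsorted) => //; rewrite inE ssize //.
  exact: leq_ltn_trans ij jn.
have hsum : \sum_(0 <= l < n'.+1) dl l = n'.
  rewrite big_mkord (eq_bigr _ (fun i _ => hdl i)).
  apply: (etrans _ hphi).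
  by rewrite [RHS](reindex_inj (@perm_inj _ sg)).
set p := fun w : 'I_n'.+1 => (inord (par n' dl w) : 'I_n'.+1).
have hw : forall w : 'I_n'.+1, w != ord0 -> 0 < w /\ w <= n'.
  move=> w nw; split; last by rewrite -ltnS.
  by rewrite lt0n; apply: contra nw => /eqP h; apply/eqP/val_inj.
have hp : forall w : 'I_n'.+1, w != ord0 -> p w < w.
  move=> w nw; have [w0 wn] := hw w nw.
  have [_ _ h3] := par_spec hmono hsum w0 wn.
  by rewrite /p inordK //; apply: ltn_trans h3 (ltn_ord w).
exists [set e | (e.1 == p e.2) && (e.2 != ord0)]; split; first exact: parent_tree hp.
exists sg; split.
  by exists (sg^-1)%g => x; [exact: permK | exact: permKV].
move=> i; rewrite -hdl /children -cardE.
have -> : [set w | (i, w) \in [set e | (e.1 == p e.2) && (e.2 != ord0)]] =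
          [set w : 'I_n'.+1 | Spre dl i < w <= Spre dl i.+1].
  apply/setP => w; rewrite !inE /=.
  have [->|nw] := eqVneq w ord0; first by rewrite andbF ltn0.
  have [w0 wn] := hw w nw.
  have [_ _ h3] := par_spec hmono hsum w0 wn.
  rewrite andbT /p -val_eqE /= inordK; last by apply: ltn_trans h3 (ltn_ord w).
  by rewrite eq_sym (par_eq hmono hsum w0 wn (ltn_ord i)).
have h1 : Spre dl i.+1 <= n'.
  by apply: leq_trans (S_mono dl (ltn_ord i)) _; rewrite (Sn hsum).
have h2 : Spre dl i.+1 < n'.+1 by rewrite ltnS.
rewrite (card_interval (S_mono dl (leqnSn i)) h2).
by rewrite S_succ addKn.
Qed.

End Part6.

Section Part7.

Lemma digit_split (a : nat -> nat) B N :
  (\sum_(k < N.+1) a k * B ^ k = (\sum_(k < N) a k.+1 * B ^ k) * B + a 0)%N.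
Proof.
rewrite big_ord_recl /= expn0 muln1 addnC; congr (_ + _)%N.
rewrite big_distrl /=; apply: eq_bigr => k _.
by rewrite /bump /= add1n expnSr mulnA.
Qed.

Lemma digits_inj B N (a b : nat -> nat) : (0 < B)%N ->
  (forall k, a k < B)%N -> (forall k, b k < B)%N ->
  (\sum_(k < N) a k * B ^ k = \sum_(k < N) b k * B ^ k)%N ->
  forall k, (k < N)%N -> a k = b k.
Proof.
move=> B0; elim: N a b => [//|N IH] a b ha hb.
rewrite !digit_split => e k kN.
have e0 : a 0%N = b 0%N.
  have := congr1 (modn^~ B) e; rewrite !modnMDl !modn_small //.
case: k kN => [//|k] kN.
have e1 : (\sum_(k < N) a k.+1 * B ^ k = \sum_(k < N) b k.+1 * B ^ k)%N.
  by have := congr1 (divn^~ B) e; rewrite !divnMDl // !divn_small // !addn0.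
exact: (IH _ _ (fun j => ha j.+1) (fun j => hb j.+1) e1 k kN).
Qed.

Lemma sum_pow_count (s : seq nat) N B : (forall x, x \in s -> x < N)%N ->
  (\sum_(x <- s) B ^ x = \sum_(k < N) count_mem (k : nat) s * B ^ k)%N.
Proof.
elim: s => [|a s IH] hs.
  by rewrite big_nil big1 // => k _.
rewrite big_cons IH; last by move=> x xs; apply: hs; rewrite inE xs orbT.
have aN : (a < N)%N by apply: hs; rewrite inE eqxx.
under [RHS]eq_bigr => k _ do rewrite [count _ _]/= mulnDl.
rewrite big_split /=; congr (_ + _)%N.
rewrite (bigD1 (Ordinal aN)) //= eqxx mul1n big1 ?addn0 // => k nk.
by rewrite -val_eqE /= in nk; rewrite eq_sym (negbTE nk) mul0n.
Qed.

Definition eexp n (psi : 'I_n -> nat) : nat := (\sum_(v < n) n.+1 ^ psi v)%N.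

Lemma MI_lt n (psi : 'I_n -> nat) : inMI psi -> forall v, (psi v < n)%N.
Proof.
move=> h v; have : (psi v <= n.-1)%N.
  by rewrite -h (bigD1 v) //= leq_addr.
by move/leq_ltn_trans; apply; rewrite prednK // (leq_ltn_trans (leq0n v) (ltn_ord v)).
Qed.

Lemma eexp_perm n (phi psi : 'I_n -> nat) : perm_equiv phi psi -> eexp phi = eexp psi.
Proof.
move=> [sg [/bij_inj sgi hsg]]; rewrite /eexp (reindex_inj sgi).
by apply: eq_bigr => v _; rewrite hsg.
Qed.

Lemma eexp_inj n (phi psi : 'I_n -> nat) : inMI phi -> inMI psi ->
  eexp phi = eexp psi -> perm_equiv phi psi.
Proof.
move=> hphi hpsi e.
set tphi := [tuple phi i | i < n]; set tpsi := [tuple psi i | i < n].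
have ecnt : forall (t : n.-tuple nat) (f : 'I_n -> nat), t = [tuple f i | i < n] ->
    inMI f -> eexp f = (\sum_(k < n) count_mem (k : nat) t * n.+1 ^ k)%N.
  move=> t f -> hf; rewrite /eexp -sum_pow_count.
    by rewrite big_tuple; apply: eq_bigr => i _; rewrite tnth_mktuple.
  by move=> x /tnthP [i ->]; rewrite tnth_mktuple MI_lt.
have hcnt : forall k, count_mem k tphi = count_mem k tpsi.
  move=> k; case: (ltnP k n) => kn.
    apply: (@digits_inj n.+1 n (fun k => count_mem k tphi) (fun k => count_mem k tpsi)) => //.
    - by move=> j; rewrite ltnS; apply: leq_trans (count_size _ _) _; rewrite size_tuple.
    - by move=> j; rewrite ltnS; apply: leq_trans (count_size _ _) _; rewrite size_tuple.
    by rewrite -(ecnt _ _ erefl hphi) -(ecnt _ _ erefl hpsi).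
  have nin : forall (f : 'I_n -> nat), inMI f -> k \notin [tuple f i | i < n].
    move=> f hf; apply/tnthP => [[i]]; rewrite tnth_mktuple => ei.
    by move: (MI_lt hf i); rewrite -ei ltnNge kn.
  by rewrite (count_memPn (nin _ hphi)) (count_memPn (nin _ hpsi)).
have ps : perm_eq tpsi tphi.
  by apply/allP => x _; rewrite /= hcnt.
have [sg hsg] := tuple_permP ps.
exists sg; split.
  by exists (sg^-1)%g => x; [exact: permK | exact: permKV].
move=> i; have := congr1 (fun s => nth 0%N s i) hsg.
by rewrite -!tnth_nth !tnth_mktuple.
Qed.

End Part7.

Section Part8.
Local Open Scope ring_scope.

Lemma poly_indep (R : realType) (I : finType) (A : pred I) (e0 : nat) (K0 : R)
  (e : I -> nat) (mu : I -> R) : K0 != 0 -> (forall i, A i -> e i != e0) ->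
  (forall y : R, K0 * y ^+ e0 = \sum_(i in A) mu i * y ^+ e i) -> False.
Proof.
move=> K0n ne h.
pose p : {poly R} := K0 *: 'X^e0 - \sum_(i in A) mu i *: 'X^(e i).
have pc : p`_e0 = K0.
  rewrite coefB coefZ coefXn eqxx mulr1 coef_sum big1 ?subr0 // => i Ai.
  by rewrite coefZ coefXn eq_sym (negbTE (ne i Ai)) mulr0.
have pn : p != 0 by apply/eqP => p0; move: pc; rewrite p0 coef0 => /esym/eqP; rewrite (negbTE K0n).
have proot : forall y, root p y.
  move=> y; apply/eqP; rewrite /p hornerD hornerN hornerZ hornerXn horner_sum h.
  by apply/eqP; rewrite subr_eq0; apply/eqP; apply: eq_bigr => i _; rewrite hornerZ hornerXn.
have := max_poly_roots pn (rs := [seq i%:R | i <- iota 0 (size p)]).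
rewrite size_map size_iota ltnn.
have h1 : all (root p) [seq i%:R | i <- iota 0 (size p)] by apply/allP => x _; exact: proot.
have h2 : uniq [seq (i%:R : R) | i <- iota 0 (size p)].
  rewrite map_inj_uniq ?iota_uniq // => i j /eqP; rewrite eqr_nat => /eqP.
  done.
by move/(_ h1 h2).
Qed.

Section Smooth.
Variable R : realType.
Variable d : nat.
Variable i0 : 'I_d.

Definition Qf (q : {poly R}) (js : seq 'I_d) : {poly R} :=
  foldr (fun j q => if j == i0 then q^`() else 0) q js.

Lemma partials_axis (q : {poly R}) js :
  partials js (fun y : vec R d => q.[y i0]) = fun y => (Qf q js).[y i0].
Proof.
elim: js => [//|j js IH].
rewrite /partials /= -/(partials js _) IH partial_axis.
apply/funext => y /=; case: (j == i0); first by rewrite -derivE.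
by rewrite horner0.
Qed.

Lemma cont_axis (q : {poly R}) x : cont_at (fun y : vec R d => q.[y i0]) x.
Proof.
move=> e e0.
have := @continuous_horner R q (x i0).
move/cvgrPdist_lt => /(_ e e0) /nbhs_ballP [del /= del0 hb].
exists del => // y hy.
have := hb (y i0); rewrite /ball_ /= => h; rewrite distrC; apply: h.
by rewrite distrC; exact: hy.
Qed.

Lemma deriv_axis (q : {poly R}) x j :
  derivable (fun t => q.[upd x j t i0]) 0 1.
Proof.
rewrite /upd; case: (i0 == j).
  have -> : (fun t => q.[x i0 + t]) = horner (q \Po ('X + (x i0)%:P)).
    by apply/funext => t; rewrite horner_comp hornerD hornerX hornerC addrC.
  exact: derivable_horner.
exact: derivable_cst.
Qed.

Lemma smooth_axis (q : {poly R}) : smooth_scalar (fun y : vec R d => q.[y i0]).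
Proof.
move=> js x; rewrite partials_axis; split; first exact: cont_axis.
by move=> j; exact: deriv_axis.
Qed.

Lemma smooth_ghat (p : {poly R}) : smooth (ghat i0 (horner p)).
Proof.
move=> k.
have -> : (fun x => ghat i0 (horner p) x k) =
          (fun y : vec R d => (if k == i0 then p else 0).[y i0]).
  by apply/funext => y; rewrite /ghat; case: (k == i0); rewrite ?horner0.
exact: smooth_axis.
Qed.

Definition Fpoly (p : {poly R}) : Cd R d := MkCd (smooth_ghat p).

End Smooth.

Lemma derive1n_horner (R : realType) (p : {poly R}) m :
  derive1n m (horner p) = horner (p^`(m)).
Proof.
elim: m => [|m IH]; first by rewrite derivn0.
by rewrite derive1nS IH -derivE derivnS.
Qed.

Lemma G_poly (R : realType) n (y : R) (psi : 'I_n -> nat) : (forall v, psi v < n)%N ->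
  \prod_(v < n) derive1n (psi v) (horner (\poly_(k < n) y ^+ (n.+1 ^ k))) 0 =
  (\prod_(v < n) ((psi v)`!)%:R) * y ^+ (eexp psi).
Proof.
move=> hpsi.
rewrite (eq_bigr (fun v => ((psi v)`!)%:R * y ^+ (n.+1 ^ psi v))); last first.
  move=> v _; rewrite derive1n_horner horner_coef0 coef_derivn addn0 ffactnn coef_poly hpsi.
  by rewrite mulr_natl.
by rewrite big_split /= prodrXr.
Qed.

Lemma fact_prod_neq0 (R : realType) n (psi : 'I_n -> nat) :
  (\prod_(v < n) ((psi v)`!)%:R : R) != 0.
Proof.
rewrite -natr_prod pnatr_eq0 -lt0n prodn_gt0 // => v; exact: fact_gt0.
Qed.

End Part8.

Section Part9.
Local Open Scope ring_scope.

Lemma exists_maximal (T : finType) (P : {set T} -> Prop) :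
  P finset.set0 -> exists B, P B /\ forall x, x \notin B -> ~ P (x |: B).
Proof.
move=> P0.
suff: forall k B, P B -> (#|T| - #|B| <= k)%N ->
    exists B, P B /\ forall x, x \notin B -> ~ P (x |: B).
  by move/(_ #|T| finset.set0 P0); apply; apply: leq_subr.
elim=> [|k IH] B PB hk.
  exists B; split => // x xB Px.
  have := max_card (x |: B); rewrite cardsU1 xB add1n => h.
  by move: hk; rewrite leqn0 subn_eq0 leqNgt h.
case: (classic (exists x, x \notin B /\ P (x |: B))) => [[x [xB Px]]|nex].
  apply: (IH _ Px); rewrite cardsU1 xB add1n subnS -ltnS.
  apply: leq_trans hk; rewrite prednK // subn_gt0.
  by have := max_card (x |: B); rewrite cardsU1 xB add1n.
exists B; split => // x xB Px; apply: nex; by exists x.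
Qed.

Section Basis.
Variable R : realType.
Variable d : nat.
Variable n : nat.

Definition lin_free (B : {set {set 'I_n * 'I_n}}) : Prop :=
  forall c : {set 'I_n * 'I_n} -> R,
    (forall (f : Cd R d) x k, \sum_(E in B) c E * PhiTree E f x k = 0) ->
    forall E, E \in B -> c E = 0.

Lemma exB : exists B : {set {set 'I_n * 'I_n}},
  [/\ forall E, E \in B -> is_rooted_tree E, lin_free B &
      forall E, is_rooted_tree E -> E \notin B -> ~ lin_free (E |: B)].
Proof.
have P0 : (forall E, E \in (finset.set0 : {set {set 'I_n * 'I_n}}) -> is_rooted_tree E) /\
    lin_free finset.set0.
  by split => [E|c _ E]; rewrite inE.
have [B [[h1 h2] h3]] := @exists_maximal _
  (fun B => (forall E, E \in B -> is_rooted_tree E) /\ lin_free B) P0.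
exists B; split => // E hE EB hf; apply: (h3 E EB); split => //.
move=> E'; rewrite !inE => /orP[/eqP ->//|]; exact: h1.
Qed.

Lemma span_tree (B : {set {set 'I_n * 'I_n}}) : lin_free B ->
  (forall E, is_rooted_tree E -> E \notin B -> ~ lin_free (E |: B)) ->
  forall E : {set 'I_n * 'I_n}, is_rooted_tree E -> exists lam : {set 'I_n * 'I_n} -> R,
    forall (f : Cd R d) x k, PhiTree E f x k = \sum_(b in B) lam b * PhiTree b f x k.
Proof.
move=> hB hmax E hE.
case: (boolP (E \in B)) => EB.
  exists (fun b => if b == E then 1 else 0) => f x k.
  rewrite (bigD1 E) //= eqxx mul1r big1 ?addr0 // => b /andP[_ nb].
  by rewrite (negbTE nb) mul0r.
have [c [hc [E' [E'in cE']]]] : exists c : {set 'I_n * 'I_n} -> R,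
    (forall (f : Cd R d) x k, \sum_(b in E |: B) c b * PhiTree b f x k = 0) /\
    exists E', E' \in E |: B /\ c E' <> 0.
  apply: NNPP => hn; apply: (hmax E hE EB) => c hc E' hE'.
  apply: NNPP => hne; apply: hn; exists c; split => //; by exists E'.
have cE0 : c E != 0.
  apply/eqP => cE0; have hB0 := hB c.
  have : forall (f : Cd R d) x k, \sum_(b in B) c b * PhiTree b f x k = 0.
    by move=> f x k; have := hc f x k; rewrite big_setU1 //= cE0 mul0r add0r.
  move/hB0 => hz; move: E'in; rewrite !inE => /orP[/eqP eE|E'B].
    by apply: cE'; rewrite eE.
  by apply: cE'; exact: hz.
exists (fun b => - (c b / c E)) => f x k.
have := hc f x k; rewrite big_setU1 //= => h0.
apply: (mulfI cE0); rewrite mulr_sumr.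
have -> : c E * PhiTree E f x k = - \sum_(b in B) c b * PhiTree b f x k.
  by apply/eqP; rewrite -addr_eq0 h0.
rewrite -sumrN; apply: eq_bigr => b _.
by rewrite mulrA mulrN mulrCA divff // mulr1 mulNr.
Qed.

End Basis.

End Part9.

Local Open Scope ring_scope.

Definition Bf (R : realType) d n : {set {set 'I_n * 'I_n}} := sval (cid (@exB R d n)).

Lemma BfP (R : realType) d n :
  [/\ forall E, E \in Bf R d n -> is_rooted_tree E, lin_free R d (Bf R d n) &
      forall E, is_rooted_tree E -> E \notin Bf R d n -> ~ lin_free R d (E |: Bf R d n)].
Proof. exact: svalP (cid (@exB R d n)). Qed.

Theorem theorem6p7 (R : realType) (d : nat) (hd : (0 < d)%N) :
  exists (CD : nat -> Type) (H : forall n, CD n -> Op R d)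
         (q : forall n, CD n -> 'I_n -> nat),
    forall n : nat, (0 < n)%N ->
      image_is_basis n (H n) /\
      (forall a : CD n, inMI (q n a)) /\
      (forall phi : 'I_n -> nat, inMI phi ->
         exists a : CD n, perm_equiv phi (q n a)) /\
      (forall a : CD n, pi_eq_G (Ordinal hd) (H n a) (q n a)).
Proof.
set i0 := Ordinal hd.
exists (fun n => 'I_#|Bf R d n|).
exists (fun n i => PhiTree (enum_val i)).
exists (fun n i => fun v => size (children (enum_val i) v)).
move=> n n0.
have [Brt Bfree Bmax] := BfP R d n.
set B := Bf R d n in Brt Bfree Bmax *.
have rt : forall i : 'I_#|B|, is_rooted_tree (enum_val i).
  by move=> i; apply: Brt; exact: enum_valP.
split; [|split; [|split]].
- split; [|split].
  + move=> i; exists (fun E => if E == enum_val i then 1 else 0) => f x k.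
    rewrite (bigD1 (enum_val i)) ?rt //= eqxx mul1r big1 ?addr0 // => E /andP[_ ne].
    by rewrite (negbTE ne) mul0r.
  + move=> Phi [c hc].
    have : forall E : {set 'I_n * 'I_n}, exists lam : {set 'I_n * 'I_n} -> R,
        is_rooted_tree E -> forall (f : Cd R d) x k,
          PhiTree E f x k = \sum_(b in B) lam b * PhiTree b f x k.
      move=> E; case: (boolP (is_rooted_tree E)) => hE.
        have [lam hlam] := span_tree Bfree Bmax hE; by exists lam.
      by exists (fun _ => 0).
    move/choice => [Lam hLam].
    exists #|B|, id, (fun i => \sum_(E | is_rooted_tree E) c E * Lam E (enum_val i)).
    move=> f x k; rewrite hc.
    under eq_bigr => E hE do rewrite (hLam E hE f x k) mulr_sumr.
    rewrite exchange_big /= big_enum_val; apply: eq_bigr => i _.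
    by rewrite mulr_suml; apply: eq_bigr => E _; rewrite mulrA.
  + move=> m a c hinj hsum i.
    pose c' := fun E => \sum_(j < m | enum_val (a j) == E) c j.
    have hz : forall (f : Cd R d) x k, \sum_(E in B) c' E * PhiTree E f x k = 0.
      move=> f x k; rewrite -[RHS](hsum f x k).
      under eq_bigr => E _ do rewrite /c' mulr_suml big_mkcond /=.
      rewrite exchange_big /=; apply: eq_bigr => j _.
      rewrite (bigD1 (enum_val (a j))) ?enum_valP //= eqxx big1 ?addr0 // => E /andP[_ ne].
      by rewrite eq_sym (negbTE ne).
    have := Bfree c' hz (enum_val (a i)) (enum_valP _).
    rewrite /c' (big_pred1 i) // => j /=.
    apply/eqP/eqP => [/enum_val_inj e|->//]; apply: hinj; by rewrite e.
- by move=> i; apply: tree_MI; exact: rt.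
- move=> phi hphi.
  apply: NNPP => nex.
  have [E0 [hE0 hpe]] := exists_tree n0 hphi.
  have [lam hlam] := span_tree Bfree Bmax hE0.
  set psi0 := fun v => size (children E0 v).
  have hpsi0 : inMI psi0 by exact: tree_MI.
  pose K (psi : 'I_n -> nat) : R := \prod_(v < n) ((psi v)`!)%:R.
  pose psb := fun (b : {set 'I_n * 'I_n}) v => size (children b v).
  apply: (@poly_indep R _ (mem B) (eexp psi0) (K psi0) (fun b => eexp (psb b))
            (fun b => lam b * K (psb b))).
  + exact: fact_prod_neq0.
  + move=> b bB; apply/eqP => e.
    have e' : eexp phi = eexp (psb b) by rewrite (eexp_perm hpe) e.
    have hb := Brt b bB.
    apply: nex; exists (enum_rank_in bB b).
    by rewrite enum_rankK_in //; apply: eexp_inj => //; exact: tree_MI.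
  + move=> y.
    pose p : {poly R} := \poly_(k < n) y ^+ (n.+1 ^ k).
    have := hlam (Fpoly i0 p) (on_axis i0 0) i0.
    rewrite (PhiTree_axis hE0 (g := horner p)) // G_poly; last by move=> v; exact: (MI_lt hpsi0 v).
    move=> ->; apply: eq_bigr => b bB.
    rewrite (PhiTree_axis (Brt b bB) (g := horner p)) // G_poly; last first.
      by move=> v; apply: (MI_lt (tree_MI (Brt b bB))).
    by rewrite mulrA.
- move=> i g _ F hF t.
  exact: PhiTree_axis.
Qed.
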